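(* Let $\mathcal V$ be a congruence modular variety, $\mathbb A\in\mathcal V$, $n\ge2$, and let $R\le\mathbb A^{2^n}$ be an $(n)$-dimensional tolerance of $\mathbb A$ such that $\mathrm{face}_i^0(R)$ is an $(n-1)$-dimensional congruence of $\mathbb A$ for each $i\in n$. If there is $k\in n$ such that $\mathrm{face}_k(R)$ is a congruence of the algebra $\mathrm{face}_k^0(R)$ (a subalgebra of $\mathbb A^{2^{n\setminus\{k\}}}$), then $R$ is an $(n)$-dimensional congruence of $\mathbb A$.
   Context: Cube notation. $n=\{0,\dots,n-1\}$, $2=\{0,1\}$; for finite $S\subseteq\mathbb N$, $2^S$ is the set of functions $S\to2$, and an $(S)$-cube over $A$ is $\gamma\in A^{2^S}$. For $i\in S$, $j\in 2$: $\mathrm{face}_i^j(\gamma)\in A^{2^{S\setminus\{i\}}}$ is $g\mapsto\gamma_{g\cup\{(i,j)\}}$; $\mathrm{glue}_{\{i\}}(\zeta,\eta)$ is the unique cube with $\mathrm{face}_i^0=\zeta$, $\mathrm{face}_i^1=\eta$; $\mathrm{refl}_i^j(\gamma)=\mathrm{glue}_{\{i\}}(\mathrm{face}_i^j\gamma,\mathrm{face}_i^j\gamma)$; $\mathrm{sym}_i(\gamma)=\mathrm{glue}_{\{i\}}(\mathrm{face}_i^1\gamma,\mathrm{face}_i^0\gamma)$. For $R\subseteq A^{2^S}$, $\mathrm{face}_i^j(R)=\{\mathrm{face}_i^j(\gamma):\gamma\in R\}$ and $\mathrm{face}_i(R)=\{(\mathrm{face}_i^0\gamma,\mathrm{face}_i^1\gamma):\gamma\in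 R\}$. A $1$-element-index cube is identified with a pair. With $|S|=m\ge1$: a subuniverse $R$ of $\mathbb A^{2^S}$ is an $(m)$-dimensional tolerance of $\mathbb A$ if $\mathrm{refl}_i^j(\gamma),\mathrm{sym}_i(\gamma)\in R$ for all $\gamma\in R$, $i\in S$, $j\in2$; it is an $(m)$-dimensional congruence of $\mathbb A$ if moreover $\mathrm{face}_i(R)$ is a transitive relation for every $i\in S$. *)

(* Defs.v *)
From mathcomp Require Import all_boot.
Set Implicit Arguments.
Unset Strict Implicit.
Unset Printing Implicit Defensive.

Section UA.
Variables (F : Type) (ar : F -> nat).

Definition ops_on (A : Type) := forall f : F, ('I_(ar f) -> A) -> A.

Inductive term : Type :=
| Var : nat -> term
| App : forall f : F, ('I_(ar f) -> term) -> term.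

Fixpoint eval (A : Type) (opsA : ops_on A) (v : nat -> A) (t : term) : A :=
  match t with
  | Var x => v x
  | App f ts => opsA f (fun k => eval opsA v (ts k))
  end.

Definition models (E : term -> term -> Prop) (A : Type) (opsA : ops_on A) :=
  forall s t, E s t -> forall v : nat -> A, eval opsA v s = eval opsA v t.

Definition is_congruence (A : Type) (opsA : ops_on A) (th : A -> A -> Prop) :=
  [/\ (forall x, th x x), (forall x y, th x y -> th y x),
      (forall x y z, th x y -> th y z -> th x z) &
      (forall f (xs ys : 'I_(ar f) -> A), (forall k, th (xs k) (ys k)) ->
          th (opsA f xs) (opsA f ys))].

Definition cong_join (A : Type) (opsA : ops_on A) (al be : A -> A -> Prop) :=
  fun x y => forall th, is_congruence opsA th ->
    (forall a b, al a b -> th a b) -> (forall a b, be a b -> th a b) -> th x y.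

Definition cong_meet (A : Type) (al be : A -> A -> Prop) :=
  fun x y => al x y /\ be x y.

Definition cong_modular (A : Type) (opsA : ops_on A) :=
  forall al be ga, is_congruence opsA al -> is_congruence opsA be ->
    is_congruence opsA ga -> (forall x y, al x y -> ga x y) ->
    forall x y, cong_meet (cong_join opsA al be) ga x y <->
                cong_join opsA al (cong_meet be ga) x y.

Definition CM_variety (E : term -> term -> Prop) :=
  forall (B : Type) (opsB : ops_on B), models E opsB -> cong_modular opsB.

End UA.

(* An (S)-cube over A, for a finite index type S, is a map 2^S -> A. *)
Definition cube (S : finType) (A : Type) := {ffun {ffun S -> bool} -> A}.

Definition minus (S : finType) (i : S) : finType := {x : S | x != i}.

Section Cubes.
Variables (S : finType) (A : Type).

(* g U {(i,j)} *)
Definition ext (i : S) (j : bool) (g : {ffun minus i -> bool}) : {ffun S -> bool} :=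
  [ffun x => oapp g j (insub x : option (minus i))].

Definition restr (i : S) (h : {ffun S -> bool}) : {ffun minus i -> bool} :=
  [ffun y => h (val y)].

Definition face (i : S) (j : bool) (c : cube S A) : cube (minus i) A :=
  [ffun g => c (@ext i j g)].

Definition glue (i : S) (z e : cube (minus i) A) : cube S A :=
  [ffun h : {ffun S -> bool} => if h i then e (@restr i h) else z (@restr i h)].

Definition refl_cube (i : S) (j : bool) (c : cube S A) : cube S A :=
  @glue i (@face i j c) (@face i j c).

Definition sym_cube (i : S) (c : cube S A) : cube S A :=
  @glue i (@face i true c) (@face i false c).

Definition face_set (i : S) (j : bool) (R : cube S A -> Prop) : cube (minus i) A -> Prop :=
  fun z => exists2 c, R c & @face i j c = z.

Definition face_rel (i : S) (R : cube S A -> Prop) : cube (minus i) A -> cube (minus i) A -> Prop :=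
  fun z e => exists c, [/\ R c, @face i false c = z & @face i true c = e].
End Cubes.

Arguments ext {S} i j g.
Arguments restr {S} i h.
Arguments face {S A} i j c.
Arguments glue {S A} i z e.
Arguments refl_cube {S A} i j c.
Arguments sym_cube {S A} i c.
Arguments face_set {S A} i j R _.
Arguments face_rel {S A} i R _ _.

Section CubeAlg.
Variables (F : Type) (ar : F -> nat).

Definition pow_ops (S : finType) (A : Type) (opsA : ops_on ar A) : ops_on ar (cube S A) :=
  fun f cs => [ffun g => opsA f (fun k => cs k g)].

Definition subuniverse (B : Type) (opsB : ops_on ar B) (R : B -> Prop) :=
  forall f (xs : 'I_(ar f) -> B), (forall k, R (xs k)) -> R (opsB f xs).

Definition cube_tolerance (S : finType) (A : Type) (opsA : ops_on ar A)
    (R : cube S A -> Prop) :=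
  [/\ subuniverse (@pow_ops S A opsA) R,
      (forall c i j, R c -> R (refl_cube i j c)) &
      (forall c i, R c -> R (sym_cube i c))].

Definition transitive_rel (T : Type) (r : T -> T -> Prop) :=
  forall x y z, r x y -> r y z -> r x z.

Definition cube_congruence (S : finType) (A : Type) (opsA : ops_on ar A)
    (R : cube S A -> Prop) :=
  cube_tolerance opsA R /\ forall i : S, transitive_rel (face_rel i R).

Definition congruence_of_sub (B : Type) (opsB : ops_on ar B) (U : B -> Prop)
    (th : B -> B -> Prop) :=
  [/\ (forall x y, th x y -> U x /\ U y),
      (forall x, U x -> th x x), (forall x y, th x y -> th y x),
      transitive_rel th &
      (forall f (xs ys : 'I_(ar f) -> B), (forall k, th (xs k) (ys k)) ->
          th (opsB f xs) (opsB f ys))].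
End CubeAlg.

(* Main.v *)
Require Import Defs.
From Stdlib Require Import FunctionalExtensionality ProofIrrelevance.
From mathcomp Require Import all_boot.
Set Implicit Arguments. Unset Strict Implicit. Unset Printing Implicit Defensive.


Definition cgU F (ar : F -> nat) (Z : Type) (opsZ : ops_on ar Z) (U : Z -> Prop) (th : Z -> Z -> Prop) :=
  [/\ (forall x, U x -> th x x),
      (forall x y, U x -> U y -> th x y -> th y x),
      (forall x y z, U x -> U y -> U z -> th x y -> th y z -> th x z) &
      (forall f (xs ys : 'I_(ar f) -> Z), (forall j, U (xs j)) -> (forall j, U (ys j)) ->
         (forall j, th (xs j) (ys j)) -> th (opsZ f xs) (opsZ f ys))].

Definition prod_ops F (ar : F -> nat) Z1 Z2 (o1 : ops_on ar Z1) (o2 : ops_on ar Z2) : ops_on ar (Z1 * Z2) :=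
  fun f ws => (o1 f (fun j => (ws j).1), o2 f (fun j => (ws j).2)).

Lemma eval_prod F (ar : F -> nat) Z1 Z2 (o1 : ops_on ar Z1) (o2 : ops_on ar Z2) (v : nat -> Z1 * Z2) t :
  eval (prod_ops o1 o2) v t = (eval o1 (fun x => (v x).1) t, eval o2 (fun x => (v x).2) t).
Proof.
elim: t => [x|f ts IH] /=; first by case: (v x).
rewrite /prod_ops /=; congr (_, _); congr (_ _ _); apply: functional_extensionality => j; by rewrite IH.
Qed.

Lemma models_prod F (ar : F -> nat) E Z1 Z2 (o1 : ops_on ar Z1) (o2 : ops_on ar Z2) :
  models E o1 -> models E o2 -> models E (prod_ops o1 o2).
Proof. by move=> m1 m2 s t Est v; rewrite !eval_prod (m1 s t Est) (m2 s t Est). Qed.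

Definition sub_ops F (ar : F -> nat) Z (oZ : ops_on ar Z) (U : Z -> Prop) (HU : subuniverse oZ U) :
  ops_on ar {z | U z} :=
  fun f ws => exist U (oZ f (fun j => proj1_sig (ws j))) (HU f _ (fun j => proj2_sig (ws j))).

Lemma eval_sub F (ar : F -> nat) Z (oZ : ops_on ar Z) (U : Z -> Prop) (HU : subuniverse oZ U) v t :
  proj1_sig (eval (sub_ops HU) v t) = eval oZ (fun x => proj1_sig (v x)) t.
Proof.
elim: t => [x|f ts IH] //=.
congr (oZ f _); apply: functional_extensionality => j; by rewrite IH.
Qed.

Lemma sig_eq Z (U : Z -> Prop) (a b : {z | U z}) : proj1_sig a = proj1_sig b -> a = b.
Proof. case: a b => [a Ha] [b Hb] /= e; subst b; by rewrite (proof_irrelevance _ Ha Hb). Qed.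

Lemma models_sub F (ar : F -> nat) E Z (oZ : ops_on ar Z) (U : Z -> Prop) (HU : subuniverse oZ U) :
  models E oZ -> models E (sub_ops HU).
Proof. move=> m s t Est v; apply: sig_eq; by rewrite !eval_sub (m s t Est). Qed.

Lemma eval_pow F (ar : F -> nat) (A : Type) (opsA : ops_on ar A) (S : finType) (v : nat -> cube S A) t :
  eval (pow_ops opsA) v t = [ffun g => eval opsA (fun x => v x g) t].
Proof.
elim: t => [x|f ts IH] /=; first by apply/ffunP=> g; rewrite ffunE.
apply/ffunP=> g; rewrite !ffunE; congr (opsA f _); apply: functional_extensionality => j; by rewrite IH ffunE.
Qed.

Lemma models_pow F (ar : F -> nat) E (A : Type) (opsA : ops_on ar A) (S : finType) :
  models E opsA -> models E (@pow_ops F ar S A opsA).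
Proof. move=> m s t Est v; rewrite !eval_pow; apply/ffunP=> g; rewrite !ffunE; exact: m. Qed.

Lemma cong_and F (ar : F -> nat) Z (o : ops_on ar Z) a b :
  is_congruence o a -> is_congruence o b -> is_congruence o (fun x y => a x y /\ b x y).
Proof.
case=> a1 a2 a3 a4 [b1 b2 b3 b4]; split.
- by move=> x; split.
- by move=> x y [? ?]; split; auto.
- by move=> x y z [? ?] [? ?]; split; eauto.
- move=> f xs ys H; split; [apply: a4 | apply: b4] => j; by case: (H j).
Qed.

Lemma SL F (ar : F -> nat) E (CM : CM_variety E) Z (oZ : ops_on ar Z) (mZ : models E oZ) (U : Z -> Prop)
  (HU : subuniverse oZ U) (al be ga : Z -> Z -> Prop) :
  cgU oZ U al -> cgU oZ U be -> cgU oZ U ga ->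
  (forall a b, U a -> U b -> al a b -> be a b -> ga a b) ->
  forall x y u v, U x -> U y -> U u -> U v ->
  be x u -> be y v -> al x y -> al u v -> ga x u -> ga y v.
Proof.
move=> [a1 a2 a3 a4] [b1 b2 b3 b4] [g1 g2 g3 g4] meet x y u v Ux Uy Uu Uv bxu byv axy auv gxu.
pose Up (w : Z * Z) := U w.1 /\ U w.2 /\ be w.1 w.2.
have HUp : subuniverse (prod_ops oZ oZ) Up.
  move=> f ws H; split; [|split].
  - by apply: HU => j; case: (H j).
  - by apply: HU => j; case: (H j) => _ [].
  - by apply: b4 => j; case: (H j) => [? []].
pose P := {w | Up w}.
have mP : models E (sub_ops HUp) := models_sub HUp (models_prod mZ mZ).
have U1 : forall w : P, U (proj1_sig w).1 by move=> [w [? ?]].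
have U2 : forall w : P, U (proj1_sig w).2 by move=> [w [? []]].
pose hat (r : Z -> Z -> Prop) (a b : P) := r (proj1_sig a).1 (proj1_sig b).1 /\ r (proj1_sig a).2 (proj1_sig b).2.
have cghat : forall r, cgU oZ U r -> is_congruence (sub_ops HUp) (hat r).
  move=> r [r1 r2 r3 r4]; split.
  - by move=> w; split; apply: r1.
  - by move=> w w' [? ?]; split; apply: r2.
  - by move=> w w' w'' [? ?] [? ?]; split; [apply: (r3 _ (proj1_sig w').1) | apply: (r3 _ (proj1_sig w').2)].
  - move=> f xs ys H; split; apply: r4 => // j; by case: (H j).
pose eta0 (a b : P) := (proj1_sig a).1 = (proj1_sig b).1.
have cgeta : is_congruence (sub_ops HUp) eta0.
  split.
  - by [].
  - by rewrite /eta0 => ? ? ->.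
  - by rewrite /eta0 => ? ? ? -> ->.
  - move=> f xs ys H; rewrite /eta0 /=; congr (oZ f _); apply: functional_extensionality => j; exact: H.
pose al' (a b : P) := eta0 a b /\ hat ga a b.
have cgal' : is_congruence (sub_ops HUp) al' by apply: cong_and => //; apply: cghat.
pose Y1 : P := exist Up (y, v) (conj Uy (conj Uv byv)).
pose Y2 : P := exist Up (y, y) (conj Uy (conj Uy (b1 y Uy))).
pose X1 : P := exist Up (x, u) (conj Ux (conj Uu bxu)).
pose X2 : P := exist Up (x, x) (conj Ux (conj Ux (b1 x Ux))).
have J : cong_join (sub_ops HUp) al' (hat al) Y1 Y2.
  move=> th [t1 t2 t3 t4] Hal Hbe.
  apply: (t3 _ X1); first by apply: Hbe; split; apply: a2.
  apply: (t3 _ X2); last by apply: Hbe; split.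
  apply: Hal; split => //; split; [exact: g1 | exact: g2].
have J2 := (CM _ _ mP al' (hat al) eta0 cgal' (cghat _ (And4 a1 a2 a3 a4)) cgeta
             (fun a b H => proj1 H) Y1 Y2).1 (conj J erefl).
have := J2 (hat ga) (cghat _ (And4 g1 g2 g3 g4)) (fun a b H => proj2 H).
case.
- move=> [w Hw] [w' Hw'] [[Ha1 Ha2] /= He]; split; first by rewrite He; apply: g1; apply: U1.
  move: (Hw) (Hw') => [Uw1 [Uw2 Bw]] [Uw'1 [Uw'2 Bw']].
  apply: meet => //=; apply: (b3 _ w.1) => //; first exact: b2.
  by rewrite He.
- move=> _ /= Hvy; exact: g2.
Qed.

Definition upd (S : finType) (h : {ffun S -> bool}) (i : S) (b : bool) : {ffun S -> bool} :=
  [ffun x => if x == i then b else h x].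
Lemma updE (S : finType) (h : {ffun S -> bool}) (i : S) b x : upd h i b x = if x == i then b else h x.
Proof. by rewrite ffunE. Qed.
Lemma upd_at (S : finType) (h : {ffun S -> bool}) (i : S) b : upd h i b i = b.
Proof. by rewrite updE eqxx. Qed.
Lemma upd_ne (S : finType) (h : {ffun S -> bool}) (i j : S) b : j != i -> upd h i b j = h j.
Proof. by move=> ji; rewrite updE (negbTE ji). Qed.
Lemma upd_same (S : finType) (h : {ffun S -> bool}) (i : S) : upd h i (h i) = h.
Proof. apply/ffunP=> x; rewrite updE; by case: eqP => [->|]. Qed.
Lemma upd_fix (S : finType) (h : {ffun S -> bool}) (i : S) b : h i = b -> upd h i b = h.
Proof. move<-; exact: upd_same. Qed.
Lemma upd_upd (S : finType) (h : {ffun S -> bool}) (i : S) b b' : upd (upd h i b) i b' = upd h i b'.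
Proof. apply/ffunP=> x; rewrite !updE; by case: eqP. Qed.
Lemma upd_comm (S : finType) (h : {ffun S -> bool}) (i k : S) b b' : i != k -> upd (upd h i b) k b' = upd (upd h k b') i b.
Proof.
move=> ik; apply/ffunP=> x; rewrite !updE.
case: (eqVneq x k) => [xk|xk]; case: (eqVneq x i) => [xi|xi] //.
by move: ik; rewrite -xi xk eqxx.
Qed.

Lemma ext_restr (S : finType) (i : S) b (h : {ffun S -> bool}) : ext i b (restr i h) = upd h i b.
Proof.
apply/ffunP=> x; rewrite /ext /restr !ffunE.
case: insubP => [u Pu ux|nPx] /=.
- by rewrite ffunE ux (negbTE Pu).
- by move: nPx; rewrite negbK => ->.
Qed.
Lemma restr_ext (S : finType) (i : S) b g : restr i (ext i b g) = g.
Proof. by apply/ffunP=> u; rewrite !ffunE valK. Qed.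
Lemma ext_at (S : finType) (i : S) b g : ext i b g i = b.
Proof. by rewrite ffunE insubF ?eqxx. Qed.
Lemma upd_ext (S : finType) (i : S) b b' g : upd (ext i b g) i b' = ext i b' g.
Proof. by rewrite -ext_restr restr_ext. Qed.
Lemma ext_upd (S : finType) (k : S) (i' : minus k) b0 b g :
  ext k b0 (upd g i' b) = upd (ext k b0 g) (val i') b.
Proof.
apply/ffunP=> x; rewrite !ffunE /=.
case: insubP => [u Pu ux|nPx] /=.
- by rewrite ffunE -ux val_eqE.
- move: nPx; rewrite negbK => /eqP ->.
  by rewrite eq_sym (negbTE (valP i')).
Qed.

Lemma faceE (S : finType) A (i : S) j (c : cube S A) g : face i j c g = c (ext i j g).
Proof. by rewrite ffunE. Qed.
Lemma reflE (S : finType) A (i : S) j (c : cube S A) h : refl_cube i j c h = c (upd h i j).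
Proof. by rewrite /refl_cube /glue ffunE !faceE ext_restr; case: (h i). Qed.
Lemma symE (S : finType) A (i : S) (c : cube S A) h : sym_cube i c h = c (upd h i (~~ h i)).
Proof. rewrite /sym_cube /glue ffunE !faceE !ext_restr; by case: (h i). Qed.
Lemma refl_ffun (S : finType) A (i : S) j (c : cube S A) :
  refl_cube i j c = [ffun h => c (upd h i j)].
Proof. by apply/ffunP=> h; rewrite reflE ffunE. Qed.
Lemma powE F (ar : F -> nat) (S : finType) A (opsA : ops_on ar A) f (cs : 'I_(ar f) -> cube S A) g :
  pow_ops opsA cs g = opsA f (fun j => cs j g).
Proof. by rewrite ffunE. Qed.

Definition mix (S : finType) A (i : S) (c d : cube S A) : cube S A :=
  [ffun h : {ffun S -> bool} => if h i then d h else c h].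
Definition matchc (S : finType) A (i : S) (c d : cube S A) :=
  forall h, c (upd h i true) = d (upd h i false).
Definition degk (S : finType) A (k : S) (c : cube S A) := forall h, c (upd h k false) = c h.
Definition eqf (S : finType) A (i : S) b (c d : cube S A) := forall h, c (upd h i b) = d (upd h i b).

Lemma degE (S : finType) A (k : S) (c : cube S A) : degk k c -> forall h j, c (upd h k j) = c h.
Proof. move=> D h [] //; by rewrite -(D (upd h k true)) upd_upd D. Qed.

Lemma mix_id (S : finType) A (i : S) (c : cube S A) : mix i c c = c.
Proof. by apply/ffunP=> h; rewrite ffunE; case: (h i). Qed.

Lemma mix_pow F (ar : F -> nat) (S : finType) A (opsA : ops_on ar A) (l : S) f (xs ys : 'I_(ar f) -> cube S A) :
  mix l (pow_ops opsA xs) (pow_ops opsA ys) = pow_ops opsA (fun j => mix l (xs j) (ys j)).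
Proof.
apply/ffunP=> h; rewrite !ffunE; case hl: (h l); congr (opsA f _);
  apply: functional_extensionality => j; by rewrite ffunE hl.
Qed.

Lemma TR1 (S : finType) A (T : cube S A -> Prop) (i : S) : transitive_rel (face_rel i T) ->
  forall c d, T c -> T d -> matchc i c d -> T (mix i c d).
Proof.
move=> tr c d Tc Td m.
have e : face i true c = face i false d.
  apply/ffunP=> g; rewrite !faceE.
  by have := m (ext i true g); rewrite !upd_ext.
have [g [Tg e0 e1]] := tr _ _ _ (ex_intro _ c (And3 Tc erefl erefl))
                                 (ex_intro _ d (And3 Td (esym e) erefl)).
suff -> : mix i c d = g by [].
apply/ffunP=> h; rewrite ffunE; case hi: (h i).
- by have := congr1 (fun f : cube _ A => f (restr i h)) e1; rewrite /= !faceE ext_restr (upd_fix hi).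
- by have := congr1 (fun f : cube _ A => f (restr i h)) e0; rewrite /= !faceE ext_restr (upd_fix hi).
Qed.

Lemma TR2 (S : finType) A (T : cube S A -> Prop) (i : S) :
  (forall c d, T c -> T d -> matchc i c d -> T (mix i c d)) -> transitive_rel (face_rel i T).
Proof.
move=> H x y z [c [Tc cx cy]] [d [Td dy dz]].
exists (mix i c d); split.
- apply: H => // h; rewrite -!ext_restr -!faceE cy dy //.
- by rewrite -cx; apply/ffunP=> g; rewrite !faceE ffunE ext_at.
- by rewrite -dz; apply/ffunP=> g; rewrite !faceE ffunE ext_at.
Qed.
Lemma mixE (S : finType) A (i : S) (c d : cube S A) h : mix i c d h = if h i then d h else c h.
Proof. by rewrite ffunE. Qed.

Lemma cg_eqf F (ar : F -> nat) (A : Type) (opsA : ops_on ar A) (S : finType) (U : cube S A -> Prop) (i : S) b :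
  cgU (pow_ops opsA) U (eqf i b).
Proof.
split.
- by move=> x _ h.
- by move=> x y _ _ H h; rewrite H.
- by move=> x y z _ _ _ H1 H2 h; rewrite H1 H2.
- move=> f xs ys _ _ H h; rewrite !powE; congr (opsA f _); apply: functional_extensionality => j; exact: H.
Qed.

Lemma cg_pull F (ar : F -> nat) W Z (oW : ops_on ar W) (oZ : ops_on ar Z) (UW : W -> Prop) (UZ : Z -> Prop)
  (phi : W -> Z) r :
  cgU oZ UZ r -> (forall w, UW w -> UZ (phi w)) ->
  (forall f ws, phi (oW f ws) = oZ f (fun j => phi (ws j))) ->
  cgU oW UW (fun w w' => r (phi w) (phi w')).
Proof.
move=> [r1 r2 r3 r4] HU Hphi; split.
- by move=> x Ux; apply: r1; apply: HU.
- by move=> x y Ux Uy; apply: r2; apply: HU.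
- by move=> x y z Ux Uy Uz; apply: r3; apply: HU.
- move=> f xs ys Hx Hy H; rewrite !Hphi; apply: r4 => // j; apply: HU; [exact: Hx | exact: Hy].
Qed.

Lemma cg_and F (ar : F -> nat) Z (oZ : ops_on ar Z) (U : Z -> Prop) a b :
  cgU oZ U a -> cgU oZ U b -> cgU oZ U (fun x y => a x y /\ b x y).
Proof.
move=> [a1 a2 a3 a4] [b1 b2 b3 b4]; split.
- by move=> x Ux; split; auto.
- by move=> x y Ux Uy [? ?]; split; auto.
- by move=> x y z Ux Uy Uz [? ?] [? ?]; split; [apply: (a3 x y z) | apply: (b3 x y z)].
- move=> f xs ys Hx Hy H; split; [apply: a4 | apply: b4] => // j; by case: (H j).
Qed.

Lemma L0lem (S : finType) A (R : cube S A -> Prop) (k i : S) (ik : i != k)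
  (trB : transitive_rel (face_rel (exist _ i ik : minus k) (face_set k false R)))
  (reflR : forall c j, R c -> R (refl_cube k j c)) :
  forall c d, R c -> R d -> degk k c -> degk k d -> matchc i c d -> R (mix i c d).
Proof.
move=> c d Rc Rd Dc Dd m.
have := TR1 trB (c := face k false c) (d := face k false d).
case.
- by exists c.
- by exists d.
- by move=> g; rewrite !faceE !ext_upd /=; apply: m.
move=> g Rg eg.
suff -> : mix i c d = refl_cube k false g by apply: reflR.
apply/ffunP=> h; rewrite reflE -ext_restr -(@faceE _ _ k false g) eg.
rewrite [LHS]ffunE [RHS]ffunE !faceE ext_restr !(degE Dc) !(degE Dd) ffunE /=.
by [].
Qed.

Lemma main_ne F (ar : F -> nat) (E : term ar -> term ar -> Prop) (A : Type) (opsA : ops_on ar A)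
  (S : finType) (R : cube S A -> Prop) (CM : CM_variety E) (mA : models E opsA)
  (tol : cube_tolerance opsA R) (k i : S) (ik : i != k)
  (TK : forall c d, R c -> R d -> matchc k c d -> R (mix k c d))
  (L0 : forall c d, R c -> R d -> degk k c -> degk k d -> matchc i c d -> R (mix i c d)) :
  forall c d, R c -> R d -> matchc i c d -> R (mix i c d).
Proof.
case: tol => subR reflR symR.
have reflR' : forall c l j, R c -> R [ffun h => c (upd h l j)].
  by move=> c l j Rc; rewrite -refl_ffun; apply: reflR.
have mZ : models E (@pow_ops F ar S A opsA) := models_pow mA.
pose UB c := R c /\ degk k c.
pose th a b := R (mix k a b).
have HUB : subuniverse (pow_ops opsA) UB.
  move=> f xs H; split; first by apply: subR => j; case: (H j).
  move=> h; rewrite !powE; congr (opsA f _); apply: functional_extensionality => j; by case: (H j) => _ ->.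
have cg_th : cgU (pow_ops opsA) UB th.
  split.
  - by move=> x [Rx _]; rewrite /th mix_id.
  - move=> x y [_ Dx] [_ Dy] H; rewrite /th.
    have -> : mix k y x = sym_cube k (mix k x y).
      apply/ffunP=> h; rewrite symE !ffunE eqxx; case: (h k) => /=; by rewrite ?(degE Dx) ?(degE Dy).
    exact: symR.
  - move=> x y z [_ Dx] [_ Dy] [_ Dz] H1 H2; rewrite /th.
    have := TK _ _ H1 H2.
    have -> : mix k (mix k x y) (mix k y z) = mix k x z.
      by apply/ffunP=> h; rewrite !ffunE; case: (h k).
    apply=> h; by rewrite [mix _ _ _ _]ffunE [mix _ _ _ _]ffunE !upd_at /= !(degE Dy).
  - move=> f xs ys _ _ H; rewrite /th mix_pow; exact: subR.
have meet01 : forall a b, UB a -> UB b -> eqf i false a b -> eqf i true a b -> th a b.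
  move=> a b Ua _ H0 H1.
  have -> : b = a.
    apply/ffunP => h; rewrite -(upd_same h i); case: (h i); [exact: (esym (H1 h)) | exact: (esym (H0 h))].
  by case: cg_th => t1 _ _ _; apply: t1.
have meet10 : forall a b, UB a -> UB b -> eqf i true a b -> eqf i false a b -> th a b.
  by move=> a b Ua Ub H1 H0; apply: meet01.
have SL1 := SL CM mZ HUB (cg_eqf opsA UB i false) (cg_eqf opsA UB i true) cg_th meet01.
have SL2 := SL CM mZ HUB (cg_eqf opsA UB i true) (cg_eqf opsA UB i false) cg_th meet10.
have UBmix : forall c d, UB c -> UB d -> matchc i c d -> UB (mix i c d).
  move=> c d [Rc Dc] [Rd Dd] m; split; first exact: L0.
  by move=> h; rewrite !mixE (upd_ne _ _ ik) !(degE Dc) !(degE Dd).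
pose opsY := prod_ops (@pow_ops F ar S A opsA) (@pow_ops F ar S A opsA).
have mY : models E opsY := models_prod mZ mZ.
pose UY (w : cube S A * cube S A) := [/\ UB w.1, UB w.2 & matchc i w.1 w.2].
have HUY : subuniverse opsY UY.
  move=> f ws H; split.
  - by apply: HUB => j; case: (H j).
  - by apply: HUB => j; case: (H j).
  - move=> h; rewrite /= !powE; congr (opsA f _); apply: functional_extensionality => j.
    by case: (H j) => _ _ ->.
have cg_pr : cgU opsY UY (fun w w' => th w.1 w'.1).
  apply: (cg_pull (phi := fst)) cg_th _ _ => //; by move=> w [].
have cg_rt : cgU opsY UY (fun w w' => th w.2 w'.2).
  apply: (cg_pull (phi := snd)) cg_th _ _ => //; by move=> w [].
have cg_pt : cgU opsY UY (fun w w' => th (mix i w.1 w.2) (mix i w'.1 w'.2)).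
  apply: (cg_pull (phi := fun w => mix i w.1 w.2)) cg_th _ _.
  - by move=> w [U1 U2 m]; apply: UBmix.
  - by move=> f ws; rewrite /opsY /prod_ops /= mix_pow.
have cg_kr : cgU opsY UY (fun w w' => eqf i true w.1 w'.1).
  apply: (cg_pull (phi := fst)) (cg_eqf opsA UB i true) _ _ => //; by move=> w [].
have cg_be := cg_and cg_pr cg_rt.
have meetY : forall a b, UY a -> UY b -> eqf i true a.1 b.1 -> th a.1 b.1 /\ th a.2 b.2 ->
               th (mix i a.1 a.2) (mix i b.1 b.2).
  move=> [c d] [c' d'] [Uc Ud m] [Uc' Ud' m'] /= K [T1 T2].
  have m1 : matchc i c' d by move=> h; rewrite -K; exact: m.
  have y1 := UBmix c d Uc Ud m.
  have v1 := UBmix c' d Uc' Ud m1.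
  have w1 := UBmix c' d' Uc' Ud' m'.
  have s1 : th (mix i c d) (mix i c' d).
    apply: (SL1 c _ c') => //.
    - by move=> h; rewrite !mixE !upd_at.
    - by move=> h; rewrite mixE upd_at.
    - by move=> h; rewrite mixE upd_at.
  have s2 : th (mix i c' d) (mix i c' d').
    apply: (SL2 d _ d') => //.
    - by move=> h; rewrite -m -m' K.
    - by move=> h; rewrite !mixE !upd_at.
    - by move=> h; rewrite mixE upd_at.
    - by move=> h; rewrite mixE upd_at.
  by case: cg_th => _ _ t3 _; apply: (t3 _ (mix i c' d)).
have SLY := SL CM mY HUY cg_kr cg_be cg_pt meetY.
move=> g1 g2 R1 R2 m12.
pose c := [ffun h => g1 (upd h k false)]. pose c' := [ffun h => g1 (upd h k true)].
pose d := [ffun h => g2 (upd h k false)]. pose d' := [ffun h => g2 (upd h k true)].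
have UBk : forall g j, R g -> UB [ffun h => g (upd h k j)].
  by move=> g j Rg; split; [exact: reflR' | move=> h; rewrite !ffunE upd_upd].
have mk : forall j, matchc i [ffun h => g1 (upd h k j)] [ffun h => g2 (upd h k j)].
  by move=> j h; rewrite !ffunE !(upd_comm _ _ _ ik) m12.
have mixk : forall g : cube S A, mix k [ffun h => g (upd h k false)] [ffun h => g (upd h k true)] = g.
  by move=> g; apply/ffunP=> h; rewrite !ffunE; case hk: (h k); rewrite (upd_fix hk).
have Uc0 : forall e : cube S A, UB e -> UY ([ffun h => e (upd h i true)], [ffun h => e (upd h i true)]).
  move=> e [Re De]; split => /=.
  - split; first exact: reflR'.
    by move=> h; rewrite !ffunE -(upd_comm _ _ _ ik) De.
  - split; first exact: reflR'.
    by move=> h; rewrite !ffunE -(upd_comm _ _ _ ik) De.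
  - by move=> h; rewrite !ffunE !upd_upd.
have Tc0 : th [ffun h => c (upd h i true)] [ffun h => c' (upd h i true)].
  rewrite /th.
  have -> : mix k [ffun h => c (upd h i true)] [ffun h => c' (upd h i true)] = [ffun h => mix k c c' (upd h i true)].
    by apply/ffunP=> h; rewrite !mixE !ffunE eq_sym (negbTE ik).
  apply: reflR'; by rewrite mixk.
have := SLY ([ffun h => c (upd h i true)], [ffun h => c (upd h i true)]) (c, d)
            ([ffun h => c' (upd h i true)], [ffun h => c' (upd h i true)]) (c', d').
rewrite /= !mix_id /th.
have -> : mix k (mix i c d) (mix i c' d') = mix i g1 g2.
  apply/ffunP=> h; rewrite !ffunE; case hk: (h k); case: (h i); by rewrite ?(upd_fix hk).
apply.
- exact: Uc0 (UBk _ _ R1).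
- by split; [exact: UBk | exact: UBk | exact: mk].
- exact: Uc0 (UBk _ _ R1).
- by split; [exact: UBk | exact: UBk | exact: mk].
- by split.
- by split; rewrite /th ?mixk.
- by move=> h; rewrite !ffunE upd_upd.
- by move=> h; rewrite !ffunE upd_upd.
- exact: Tc0.
Qed.

Theorem proposition2p9
  (F : Type) (ar : F -> nat) (E : term ar -> term ar -> Prop)
  (A : Type) (opsA : ops_on ar A) (n : nat)
  (R : cube 'I_n A -> Prop) :
  CM_variety E -> models E opsA -> 2 <= n ->
  cube_tolerance opsA R ->
  (forall i : 'I_n, cube_congruence opsA (face_set i false R)) ->
  (exists k : 'I_n,
     congruence_of_sub (@pow_ops F ar (minus k) A opsA) (face_set k false R)
                       (face_rel k R)) ->
  cube_congruence opsA R.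
Proof.
move=> CM mA _ tol Hfaces [k Hk].
split => // i.
have TK : transitive_rel (face_rel k R) by case: Hk.
have TK' := TR1 TK.
apply: TR2.
case: (eqVneq i k) => [->|ik]; first exact: TK'.
apply: (main_ne CM mA tol ik TK').
apply: (@L0lem _ _ R k i ik).
- exact: (proj2 (Hfaces k) (exist _ i ik)).
- by case: tol => _ rf _ c j; apply: rf.
Qed.
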